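(* Let $\mathscr L$ and $\mathscr S$ be countable locally finite graphs with vertex sets $V_{\mathscr L}$, $V_{\mathscr S}$, and let $\pi:V_{\mathscr L}\to V_{\mathscr S}$ be surjective. Assume that there is a measurable way to assign to every infinite self-avoiding path $\gamma:\mathbb N\to V_{\mathscr S}$ an infinite self-avoiding path $\tilde\gamma:\{n_\gamma,n_\gamma+1,\dots\}\to V_{\mathscr L}$ (for some $n_\gamma\in\mathbb N$) such that $\pi(\tilde\gamma_m)=\gamma_m$ for every $m\ge n_\gamma$. For every $v\in V_{\mathscr S}$ let $p_v\in[0,1]$, and consider on $\mathscr S$ the random configuration where each vertex $v$ is retained independently with probability $p_v$. Let $\mathfrak X$ be a random subset of $V_{\mathscr L}$ such that the family $(\mathfrak X\cap\pi^{-1}(\{v\}))_{v\in V_{\mathscr S}}$ is independent and, for every $x\in V_{\mathscr L}$, $\mathbb P(x\in\mathfrak X)\ge p_{\pi(x)}$. Then the probability that there is an infinite path of retained vertices (elements of $\mathfrak X$) in $\mathscr L$ is at least the probability that there is an infinite path of retained vertices in $\mathscr S$.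
   Context: Graphs are simple and undirected; ''countable'' means finite or countably infinite; locally finite means each vertex has finitely many neighbours. A self-avoiding path visits no vertex twice. The space of infinite paths carries the topology of pointwise convergence (vertex sets discrete) and the associated Borel structure. An infinite path of retained vertices means an infinite self-avoiding path all of whose vertices are retained. *)

(* Defs.v *)
From HB Require Import structures.
From mathcomp Require Import all_boot all_order all_algebra.
From mathcomp Require Import all_classical all_reals all_analysis.
Set Implicit Arguments. Unset Strict Implicit. Unset Printing Implicit Defensive.
Import Order.TTheory GRing.Theory Num.Theory.
Local Open Scope classical_set_scope.
Local Open Scope ring_scope.

Definition simple_graph (V : Type) (adj : V -> V -> Prop) : Prop :=
  (forall x y, adj x y -> adj y x) /\ (forall x, ~ adj x x).

Definition locally_finite (V : Type) (adj : V -> V -> Prop) : Prop :=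
  forall x, finite_set [set y | adj x y].

Definition inf_sa_path (V : Type) (adj : V -> V -> Prop) (g : nat -> V) : Prop :=
  injective g /\ forall m, adj (g m) (g m.+1).

(* An infinite self-avoiding path defined on {n, n+1, ...}; the values of g
   below n are irrelevant. *)
Definition inf_sa_path_from (V : Type) (adj : V -> V -> Prop) (n : nat)
    (g : nat -> V) : Prop :=
  (forall m k, (n <= m)%N -> (n <= k)%N -> g m = g k -> m = k) /\
  (forall m, (n <= m)%N -> adj (g m) (g m.+1)).

Definition cylinders (V : Type) : set (set (nat -> V)) :=
  [set A | exists i v, A = [set g | g i = v]].
Arguments cylinders : clear implicits.

(* Borel sets of the space of infinite self-avoiding paths (subspace of V^N
   with the product of discrete topologies; for countable V its Borel
   sigma-algebra is generated by cylinders, and the subspace Borel sets are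
   the traces of these). *)
Definition path_measurable (V : Type) (adj : V -> V -> Prop)
    (A : set (nat -> V)) : Prop :=
  exists B, <<s cylinders V >> B /\ A = B `&` inf_sa_path adj.

(* The assignment gamma |-> (n_gamma, tilde gamma) is measurable: preimages of
   the generating events of the target space of paths on {n, n+1, ...}
   (disjoint union over n of path spaces) are measurable. *)
Definition lift_measurable (VS VL : Type) (adjS : VS -> VS -> Prop)
    (Phi : (nat -> VS) -> nat * (nat -> VL)) : Prop :=
  (forall n, path_measurable adjS
      [set g | inf_sa_path adjS g /\ (Phi g).1 = n]) /\
  (forall n i x, (n <= i)%N -> path_measurable adjS
      [set g | inf_sa_path adjS g /\ (Phi g).1 = n /\ (Phi g).2 i = x]).

Definition indep_sigma {d} {Omega : measurableType d} {R : realType}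
    (I : eqType) (P : probability Omega R) (F : I -> set (set Omega)) : Prop :=
  forall (s : seq I) (A : I -> set Omega), uniq s ->
    (forall i, i \in s -> F i (A i)) ->
    P (\bigcap_(i in [set i | i \in s]) A i) = (\prod_(i <- s) P (A i))%E.

Definition indep_events {d} {Omega : measurableType d} {R : realType}
    (I : eqType) (P : probability Omega R) (E : I -> set Omega) : Prop :=
  forall (s : seq I), uniq s ->
    P (\bigcap_(i in [set i | i \in s]) E i) = (\prod_(i <- s) P (E i))%E.

Definition fibre_sigma {Omega VL VS : Type} (X : Omega -> set VL)
    (pi : VL -> VS) (v : VS) : set (set Omega) :=
  <<s [set [set w | X w x] | x in [set x | pi x = v]] >>.

Definition has_inf_retained_path (V : Type) (adj : V -> V -> Prop)
    (Y : set V) : Prop :=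
  exists g, inf_sa_path adj g /\ forall m, Y (g m).

(* Main.v *)
Require Import Defs.
From HB Require Import structures.
From mathcomp Require Import all_boot all_order all_algebra.
From mathcomp Require Import all_classical all_reals all_analysis.
From mathcomp Require Import ring lra.
Import Order.TTheory GRing.Theory Num.Theory.
Local Open Scope classical_set_scope.
Local Open Scope ring_scope.
Set Implicit Arguments. Unset Strict Implicit. Unset Printing Implicit Defensive.
Section PrSec.
Context d (T : measurableType d) (R : realType) (P : probability T R).

Definition Pr (A : set T) : R := fine (P A).

Lemma PrE A : measurable A -> P A = (Pr A)%:E.
Proof. by move=> mA; rewrite /Pr fineK // fin_num_measure. Qed.

Lemma Pr_ge0 A : 0 <= Pr A.
Proof. by rewrite /Pr fine_ge0 // measure_ge0. Qed.

Lemma Pr_le A B : measurable A -> measurable B -> A `<=` B -> Pr A <= Pr B.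
Proof.
move=> mA mB AB; rewrite -lee_fin -!PrE //; apply: le_measure => //; by rewrite inE.
Qed.

Lemma Pr_le1 A : measurable A -> Pr A <= 1.
Proof. by move=> mA; rewrite -lee_fin -PrE // probability_le1. Qed.

Lemma PrT : Pr setT = 1.
Proof. by rewrite /Pr probability_setT. Qed.

Lemma Pr0 : Pr set0 = 0.
Proof. by rewrite /Pr measure0. Qed.

Lemma PrU A B : measurable A -> measurable B -> A `&` B = set0 ->
  Pr (A `|` B) = Pr A + Pr B.
Proof.
move=> mA mB AB.
apply: EFin_inj; rewrite EFinD -!PrE //; last exact: measurableU.
exact: measureU.
Qed.

Lemma Pr_split A B : measurable A -> measurable B ->
  Pr A = Pr (A `&` B) + Pr (A `&` ~` B).
Proof.
move=> mA mB; rewrite -PrU; first by rewrite -setIUr setUCr setIT.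
- exact: measurableI.
- by apply: measurableI => //; exact: measurableC.
- by rewrite setIACA setICr setI0.
Qed.

Lemma Pr_inex A B : measurable A -> measurable B ->
  Pr (A `|` B) + Pr (A `&` B) = Pr A + Pr B.
Proof.
move=> mA mB.
rewrite (Pr_split (measurableU _ _ mA mB) mA) (Pr_split mB mA).
have -> : (A `|` B) `&` A = A by rewrite setIUl setIid; apply/setUidl; exact: subIsetr.
have -> : (A `|` B) `&` ~` A = B `&` ~` A by rewrite setIUl setICr set0U.
by rewrite [B `&` A]setIC; ring.
Qed.

End PrSec.
Section SSide.
Context (R : realType) (VS : countType) (dS : measure_display)
  (OmegaS : measurableType dS) (PS : probability OmegaS R)
  (Y : OmegaS -> set VS) (p : VS -> R)
  (Y_meas : forall v, measurable [set w | Y w v])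
  (Y_prob : forall v, PS [set w | Y w v] = (p v)%:E)
  (Y_indep : indep_events PS (fun v => [set w | Y w v])).

Definition IS (l : seq VS) : set OmegaS := [set w | forall u, u \in l -> Y w u].
Definition AS (Z : seq (seq VS)) : set OmegaS :=
  [set w | exists l, l \in Z /\ forall u, u \in l -> Y w u].

Lemma IS_nil : IS [::] = setT.
Proof. by apply/seteqP; split => w //= _ u; rewrite in_nil. Qed.

Lemma IS_cons u l : IS (u :: l) = [set w | Y w u] `&` IS l.
Proof.
apply/seteqP; split => w /=.
  by move=> H; split; [apply: H; rewrite inE eqxx | move=> x xl; apply: H; rewrite inE xl orbT].
by move=> [Hu Hl] x; rewrite inE => /orP [/eqP -> // | /Hl].
Qed.

Lemma IS_meas l : measurable (IS l).
Proof.
elim: l => [|u l IH]; first by rewrite IS_nil.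
by rewrite IS_cons; exact: measurableI.
Qed.

Lemma AS_nil : AS [::] = set0.
Proof. by apply/seteqP; split => w //= [l []]; rewrite in_nil. Qed.

Lemma AS_cons l Z : AS (l :: Z) = IS l `|` AS Z.
Proof.
apply/seteqP; split => w /=.
  move=> [l' [+ H]]; rewrite inE => /orP [/eqP El | lZ]; first by subst; left.
  by right; exists l'.
case=> [H | [l' [lZ H]]]; first by exists l; rewrite inE eqxx.
by exists l'; rewrite inE lZ orbT.
Qed.

Lemma AS_meas Z : measurable (AS Z).
Proof.
elim: Z => [|l Z IH]; first by rewrite AS_nil.
by rewrite AS_cons; exact: measurableU (IS_meas l) IH.
Qed.

Lemma IS_undup l : IS l = \bigcap_(i in [set i | i \in undup l]) [set w | Y w i].
Proof.
apply/seteqP; split => w /=.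
  by move=> H i /=; rewrite mem_undup => /H.
by move=> H u ul; apply: (H u) => /=; rewrite mem_undup.
Qed.

Lemma S1 v l : v \notin l -> Pr PS ([set w | Y w v] `&` IS l) = p v * Pr PS (IS l).
Proof.
move=> vl.
have u1 : uniq (undup l) by exact: undup_uniq.
have u2 : uniq (v :: undup l) by rewrite /= mem_undup vl u1.
have h1 := Y_indep u1. have h2 := Y_indep u2.
rewrite -IS_undup in h1.
have E : \bigcap_(i in [set i | i \in v :: undup l]) [set w | Y w i] =
         [set w | Y w v] `&` IS l.
  rewrite IS_undup; apply/seteqP; split => w /=.
    move=> H; split; first by apply: (H v); rewrite /= inE eqxx.
    by move=> i /= il; apply: H; rewrite /= inE il orbT.
  by move=> [Hv H] i /=; rewrite inE => /orP [/eqP -> // | il]; exact: H.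
rewrite E big_cons -h1 Y_prob in h2.
rewrite /Pr h2 IS_undup.
rewrite fineM //; last by rewrite -IS_undup fin_num_measure //; exact: IS_meas.
Qed.

Lemma IS_cat l l' : IS (l ++ l') = IS l `&` IS l'.
Proof.
apply/seteqP; split => w /=.
  by move=> H; split => u ul; apply: H; rewrite mem_cat ul ?orbT.
by move=> [H1 H2] u; rewrite mem_cat => /orP [/H1|/H2].
Qed.

Lemma IS_AS l Z : IS l `&` AS Z = AS [seq l ++ l' | l' <- Z].
Proof.
apply/seteqP; split => w /=.
  move=> [H1 [l' [lZ H2]]]; exists (l ++ l'); split; first by apply: map_f.
  by move=> u; rewrite mem_cat => /orP [/H1|/H2].
move=> [l'' [/mapP [l' lZ El] H]]; subst l''.
have : IS (l ++ l') w by [].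
rewrite IS_cat => -[H1 H2].
by split => //; exists l'.
Qed.

Lemma S2 v (Z : seq (seq VS)) : (forall l, l \in Z -> v \notin l) ->
  Pr PS ([set w | Y w v] `&` AS Z) = p v * Pr PS (AS Z).
Proof.
move: {2}(size Z) (leqnn (size Z)) => n; elim: n Z => [|n IH] [|l Z] //=.
- by move=> _ _; rewrite AS_nil setI0 Pr0 mulr0.
- by move=> _ _; rewrite AS_nil setI0 Pr0 mulr0.
move=> sZ HZ.
have vl : v \notin l by apply: HZ; rewrite inE eqxx.
have HZ' : forall l', l' \in Z -> v \notin l' by move=> l' lZ; apply: HZ; rewrite inE lZ orbT.
have HZ'' : forall l', l' \in [seq l ++ l'0 | l'0 <- Z] -> v \notin l'.
  by move=> _ /mapP [l' lZ ->]; rewrite mem_cat negb_or vl HZ'.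
have mY := Y_meas v.
rewrite AS_cons setIUr.
have i1 := Pr_inex PS (measurableI _ _ mY (IS_meas l)) (measurableI _ _ mY (AS_meas Z)).
have i2 := Pr_inex PS (IS_meas l) (AS_meas Z).
have E : ([set w | Y w v] `&` IS l) `&` ([set w | Y w v] `&` AS Z) =
          [set w | Y w v] `&` AS [seq l ++ l' | l' <- Z].
  by rewrite setIACA setIid IS_AS.
rewrite E in i1; rewrite IS_AS in i2.
have e1 := IH _ sZ HZ'.
have e2 := IH [seq l ++ l' | l' <- Z]; rewrite size_map in e2; move: {e2}(e2 sZ HZ'') => e2.
rewrite e1 e2 S1 // in i1.
have : Pr PS ([set w | Y w v] `&` IS l `|` [set w | Y w v] `&` AS Z) +
   p v * Pr PS (AS [seq l ++ l' | l' <- Z]) =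
   p v * (Pr PS (IS l `|` AS Z) + Pr PS (AS [seq l ++ l' | l' <- Z])).
  by rewrite i1 i2; ring.
by rewrite mulrDr => /addIr.
Qed.

Lemma Srec v (Z : seq (seq VS)) :
  Pr PS (AS Z) = Pr PS (AS [seq l <- Z | v \notin l]) +
    p v * (Pr PS (AS [seq seq.filter (predC1 v) l | l <- Z]) - Pr PS (AS [seq l <- Z | v \notin l])).
Proof.
have mY := Y_meas v.
rewrite (Pr_split PS (AS_meas Z) mY).
have -> : AS Z `&` [set w | Y w v] = [set w | Y w v] `&` AS [seq seq.filter (predC1 v) l | l <- Z].
  apply/seteqP; split => w /=.
    move=> [[l [lZ H]] Hv]; split => //; exists (seq.filter (predC1 v) l); split; first exact: map_f.
    by move=> u; rewrite mem_filter => /andP [_ /H].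
  move=> [Hv [_ [/mapP [l lZ ->] H]]]; split => //; exists l; split => // u ul.
  have [/eqP -> //|uv] := boolP (u == v).
  by apply: H; rewrite mem_filter /= uv.
have -> : AS Z `&` ~` [set w | Y w v] = AS [seq l <- Z | v \notin l] `&` ~` [set w | Y w v].
  apply/seteqP; split => w /=.
    move=> [[l [lZ H]] Hv]; split => //; exists l; split => //.
    rewrite mem_filter lZ andbT; apply/negP => /H //.
  move=> [[l [+ H]] Hv]; rewrite mem_filter => /andP [_ lZ]; split => //; by exists l.
rewrite S2; last by move=> l /mapP [l' _ ->]; rewrite mem_filter /= eqxx.
have := Pr_split PS (AS_meas [seq l <- Z | v \notin l]) mY.
rewrite setIC S2; last by move=> l; rewrite mem_filter => /andP [].
move=> E.
have -> : Pr PS (AS [seq l <- Z | v \notin l] `&` ~` [set w | Y w v]) =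
  Pr PS (AS [seq l <- Z | v \notin l]) - p v * Pr PS (AS [seq l <- Z | v \notin l]).
  by rewrite {1}E; ring.
ring.
Qed.

End SSide.
Section LSsec.
Context d (T : measurableType d) (R : realType) (P : probability T R)
  (V : eqType) (Xs : V -> set T) (Xs_meas : forall x, measurable (Xs x)).

Fixpoint LS (s c : seq V) (K : set T) (F : seq V -> set T -> R) : R :=
  match s with
  | [::] => F c K
  | x :: s' => LS s' (x :: c) (K `&` Xs x) F + LS s' c (K `&` ~` Xs x) F
  end.

Lemma LS_part s c K B : measurable K -> measurable B ->
  LS s c K (fun _ K' => Pr P (K' `&` B)) = Pr P (K `&` B).
Proof.
elim: s c K => [|x s IH] c K mK mB //=.
rewrite (IH _ _ (measurableI _ _ mK (Xs_meas x)) mB).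
rewrite (IH _ _ (measurableI _ _ mK (measurableC (Xs_meas x))) mB).
rewrite (Pr_split P (measurableI _ _ mK mB) (Xs_meas x)).
by rewrite -!setIA [B `&` _]setIC [B `&` ~` _]setIC.
Qed.

Definition lsum (Tl : seq (V * R)) (c : seq V) : R :=
  \sum_(yd <- Tl) (if yd.1 \in c then yd.2 else 0).

Definition Eset (s c : seq V) (y : V) : set T :=
  if y \in c then setT else if y \in s then Xs y else set0.

Lemma LS_lin (Tl : seq (V * R)) (a : R) s c K : measurable K -> uniq (s ++ c) ->
  LS s c K (fun c' K' => Pr P K' * (a + lsum Tl c')) =
  Pr P K * a + \sum_(yd <- Tl) yd.2 * Pr P (K `&` Eset s c yd.1).
Proof.
elim: s c K => [|x s IH] c K mK /=.
  move=> _; rewrite mulrDr /lsum big_distrr /=; congr (_ + _); apply: eq_bigr => yd _.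
  rewrite /Eset in_nil; case: ifP => _; first by rewrite setIT mulrC.
  by rewrite setI0 Pr0 !mulr0.
move=> u0.
have pe : perm_eq (s ++ [:: x] ++ c) ([:: x] ++ s ++ c) by rewrite (perm_catCA s [:: x] c) perm_refl.
have u1 : uniq (s ++ x :: c) by rewrite (perm_uniq pe).
have us : uniq (s ++ c) by move: u0 => /= /andP [].
have : x \notin s ++ c by move: u0 => /= /andP [].
rewrite mem_cat negb_or => /andP [xs xc].
rewrite (IH _ _ (measurableI _ _ mK (Xs_meas x)) u1).
rewrite (IH _ _ (measurableI _ _ mK (measurableC (Xs_meas x))) us).
rewrite addrACA -mulrDl -(Pr_split P mK (Xs_meas x)); congr (_ + _).
rewrite -big_split /=; apply: eq_bigr => yd _; rewrite -mulrDr; congr (_ * _).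
have [/eqP ->|yx] := boolP (yd.1 == x).
  rewrite /Eset !inE eqxx /= (negbTE xc) (negbTE xs) setIT setI0 Pr0 addr0.
  by [].
have -> : Eset s (x :: c) yd.1 = Eset s c yd.1 by rewrite /Eset inE (negbTE yx).
have -> : Eset (x :: s) c yd.1 = Eset s c yd.1 by rewrite /Eset [yd.1 \in x :: s]inE (negbTE yx).
have mE : measurable (Eset s c yd.1).
  by rewrite /Eset; case: ifP => _ //; case: ifP => _ //.
rewrite (Pr_split P (measurableI _ _ mK mE) (Xs_meas x)).
by rewrite -!setIA [Xs x `&` _]setIC [~` Xs x `&` _]setIC.
Qed.

Lemma LS_mono (Inv : seq V -> seq V -> set T -> Prop) (F F' : seq V -> set T -> R) :
  (forall x s c K, Inv (x :: s) c K -> Inv s (x :: c) (K `&` Xs x) /\ Inv s c (K `&` ~` Xs x)) ->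
  (forall c K, Inv [::] c K -> F c K <= F' c K) ->
  forall s c K, Inv s c K -> LS s c K F <= LS s c K F'.
Proof.
move=> Hstep Hleaf; elim => [|x s IH] c K /= HI; first exact: Hleaf.
by case: (Hstep _ _ _ _ HI) => H1 H2; apply: lerD; apply: IH.
Qed.

End LSsec.
Section LBsec.
Context d (T : measurableType d) (R : realType) (P : probability T R)
  (V : eqType) (D : V -> set T) (D_meas : forall x, measurable (D x)).

Fixpoint dz (B : set T) (Rl : seq V) : seq (V * R) :=
  match Rl with
  | [::] => [::]
  | x :: R' => (x, Pr P (B `|` D x) - Pr P B) :: dz (B `|` D x) R'
  end.

Definition Uc (Rl c : seq V) : set T := [set w | exists y, y \in Rl /\ y \in c /\ D y w].

Lemma Uc_nil c : Uc [::] c = set0.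
Proof. by apply/seteqP; split => w //= [y []]; rewrite in_nil. Qed.

Lemma Uc_cons x Rl c : Uc (x :: Rl) c = (if x \in c then D x else set0) `|` Uc Rl c.
Proof.
apply/seteqP; split => w /=.
  move=> [y [+ [yc Dy]]]; rewrite inE => /orP [/eqP E|yR].
    by subst; left; rewrite yc.
  by right; exists y.
case=> [|[y [yR [yc Dy]]]].
  case: ifP => // xc Dx; by exists x; rewrite inE eqxx.
by exists y; rewrite inE yR orbT.
Qed.

Lemma Uc_meas Rl c : measurable (Uc Rl c).
Proof.
elim: Rl => [|x Rl IH]; first by rewrite Uc_nil.
rewrite Uc_cons; apply: measurableU IH; by case: ifP.
Qed.

Lemma dz_prop B Rl : measurable B -> forall yd, yd \in dz B Rl -> yd.1 \in Rl /\ 0 <= yd.2.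
Proof.
elim: Rl B => [|x Rl IH] B mB yd //=.
rewrite in_cons => /orP [/eqP -> /=|].
  split; first by rewrite eqxx.
  rewrite subr_ge0; apply: Pr_le; [exact: mB|exact: measurableU mB (D_meas x)|exact: subsetUl].
move/(IH _ (measurableU _ _ mB (D_meas x))) => [h1 h2]; split => //.
by rewrite h1 orbT.
Qed.

Lemma dz_sum B Rl : \sum_(yd <- dz B Rl) yd.2 = Pr P (B `|` Uc Rl Rl) - Pr P B.
Proof.
have Uall : forall Rl', Uc Rl' Rl' = [set w | exists y, y \in Rl' /\ D y w].
  move=> Rl'; apply/seteqP; split => w /=; first by move=> [y [? [? ?]]]; exists y.
  by move=> [y [? ?]]; exists y.
rewrite Uall; elim: Rl B => [|x Rl IH] B /=.
  rewrite big_nil.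
  have -> : [set w | exists y, y \in [::] /\ D y w] = set0 by apply/seteqP; split => w // [y []]; rewrite in_nil.
  by rewrite setU0 subrr.
rewrite big_cons /= IH.
have -> : B `|` D x `|` [set w | exists y, y \in Rl /\ D y w] =
          B `|` [set w | exists y, y \in x :: Rl /\ D y w].
  apply/seteqP; split => w /=.
    case=> [[Bw|Dw]|[y [yR Dy]]]; [by left|right; exists x; by rewrite inE eqxx|right; exists y; by rewrite inE yR orbT].
  case=> [Bw|[y [+ Dy]]]; first by left; left.
  rewrite inE => /orP [/eqP E|yR]; first by subst; left; right.
  by right; exists y.
ring.
Qed.

Lemma LB B Rl c : measurable B ->
  Pr P B + lsum (dz B Rl) c <= Pr P (B `|` Uc Rl c).
Proof.
elim: Rl B => [|x Rl IH] B mB /=.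
  by rewrite /lsum big_nil addr0 Uc_nil setU0.
have mBx := measurableU _ _ mB (D_meas x).
have := IH _ mBx.
rewrite /lsum big_cons /= Uc_cons -/(lsum _ _).
case: ifP => xc IH'.
  rewrite setUA; apply: le_trans IH'; lra.
rewrite set0U.
have mU := Uc_meas Rl c.
have i1 := Pr_inex P mB mU.
have i2 := Pr_inex P mBx mU.
have le1 : Pr P (B `&` Uc Rl c) <= Pr P ((B `|` D x) `&` Uc Rl c).
  apply: Pr_le; [exact: measurableI|exact: measurableI|].
  by apply: setSI; exact: subsetUl.
rewrite add0r.
have : Pr P (B `|` D x `|` Uc Rl c) - Pr P (B `|` D x) <= Pr P (B `|` Uc Rl c) - Pr P B.
  have e1 : Pr P (B `|` D x `|` Uc Rl c) = Pr P (B `|` D x) + Pr P (Uc Rl c) - Pr P ((B `|` D x) `&` Uc Rl c) by rewrite -i2; ring.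
  have e2 : Pr P (B `|` Uc Rl c) = Pr P B + Pr P (Uc Rl c) - Pr P (B `&` Uc Rl c) by rewrite -i1; ring.
  rewrite e1 e2; lra.
lra.
Qed.

End LBsec.
Section FibSec.
Context (R : realType) (VL VS : countType) (pi : VL -> VS)
  (dL : measure_display) (OmegaL : measurableType dL)
  (PL : probability OmegaL R) (X : OmegaL -> set VL)
  (X_meas : forall x, measurable [set w | X w x])
  (X_indep : indep_sigma PL (fibre_sigma X pi)).

Notation fsig := (fibre_sigma X pi).

Lemma fs_meas v K : fsig v K -> measurable K.
Proof.
apply: smallest_sub; first exact: sigma_algebra_measurable.
by move=> A [x /= _ <-]; exact: X_meas.
Qed.

Lemma fs_C v K : fsig v K -> fsig v (~` K).
Proof. by move=> h; rewrite -setTD; exact: sigma_algebraCD. Qed.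

Lemma fs_U v A B : fsig v A -> fsig v B -> fsig v (A `|` B).
Proof.
move=> hA hB.
have -> : A `|` B = \bigcup_i (if i is 0%N then A else B).
  apply/seteqP; split => w /=.
    by case=> h; [exists 0%N | exists 1%N].
  by move=> [[|i] _ h]; [left|right].
by apply: sigma_algebra_bigcup => -[|i].
Qed.

Lemma fs_I v A B : fsig v A -> fsig v B -> fsig v (A `&` B).
Proof.
move=> hA hB; rewrite -[A `&` B]setCK setCI.
by apply: fs_C; apply: fs_U; exact: fs_C.
Qed.

Lemma fs_X v x : pi x = v -> fsig v [set w | X w x].
Proof. by move=> pxv; apply: sub_sigma_algebra; exists x. Qed.

Lemma fs_T v : fsig v setT.
Proof. by rewrite -setC0; apply: fs_C; exact: sigma_algebra0. Qed.

Definition Gset (U : seq VS) (A : VS -> set OmegaL) : set OmegaL :=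
  \bigcap_(i in [set i | i \in U]) A i.

Definition upd (A : VS -> set OmegaL) v K := fun i => if i == v then K else A i.

Lemma Gset_nil A : Gset [::] A = setT.
Proof. by apply/seteqP; split => w // _ i /=; rewrite in_nil. Qed.

Lemma Gset_cons u U A : Gset (u :: U) A = A u `&` Gset U A.
Proof.
apply/seteqP; split => w /=.
  move=> H; split; first by apply: H; rewrite /= inE eqxx.
  by move=> i /= iU; apply: H; rewrite /= inE iU orbT.
by move=> [Hu H] i /=; rewrite inE => /orP [/eqP -> // | iU]; exact: H.
Qed.

Lemma Gset_upd U A v K : v \notin U -> Gset U (upd A v K) = Gset U A.
Proof.
move=> vU; apply/seteqP; split => w /= H i /= iU; have := H i iU; rewrite /upd;
  case: eqP => // E; by subst; rewrite iU in vU.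
Qed.

Lemma G_meas U A : (forall i, i \in U -> fsig i (A i)) -> measurable (Gset U A).
Proof.
elim: U => [|u U IH] HA; first by rewrite Gset_nil.
rewrite Gset_cons; apply: measurableI.
  by apply: (@fs_meas u); apply: HA; rewrite inE eqxx.
by apply: IH => i iU; apply: HA; rewrite inE iU orbT.
Qed.

Lemma G_indep U A v K : uniq U -> (forall i, i \in U -> fsig i (A i)) -> v \notin U ->
  fsig v K -> Pr PL (Gset U A `&` K) = Pr PL (Gset U A) * Pr PL K.
Proof.
move=> uU HA vU hK.
have h1 := X_indep uU HA.
have u2 : uniq (v :: U) by rewrite /= vU uU.
have HA2 : forall i, i \in v :: U -> fsig i (upd A v K i).
  move=> i; rewrite inE /upd; case: eqP => [-> //|_] /= iU; exact: HA.
have h2 := X_indep u2 HA2.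
rewrite -/(Gset _ _) Gset_cons Gset_upd // big_cons /upd eqxx in h2.
rewrite -/(Gset _ _) in h1.
have E : (\prod_(j <- U) PL (if j == v then K else A j) = \prod_(j <- U) PL (A j))%E.
  rewrite big_seq_cond [RHS]big_seq_cond; apply: eq_bigr => i /andP [iU _].
  by case: eqP => // E; subst; rewrite iU in vU.
rewrite E -h1 in h2.
rewrite setIC /Pr h2 fineM; first by rewrite mulrC.
  by apply: fin_num_measure; exact: (fs_meas hK).
by apply: fin_num_measure; exact: G_meas.
Qed.

Definition IL (w : seq VL) : set OmegaL := [set om | forall x, x \in w -> X om x].
Definition BL (W : seq (seq VL)) : set OmegaL :=
  [set om | exists w, w \in W /\ forall x, x \in w -> X om x].

Lemma IL_meas w : measurable (IL w).
Proof.
elim: w => [|x w IH].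
  by have -> : IL [::] = setT by apply/seteqP; split => om // _ x; rewrite in_nil.
have -> : IL (x :: w) = [set om | X om x] `&` IL w.
  apply/seteqP; split => om /=.
    by move=> H; split; [apply: H; rewrite inE eqxx| move=> y yw; apply: H; rewrite inE yw orbT].
  by move=> [H1 H2] y; rewrite inE => /orP [/eqP -> //|/H2].
exact: measurableI.
Qed.

Lemma BL_meas W : measurable (BL W).
Proof.
elim: W => [|w W IH].
  by have -> : BL [::] = set0 by apply/seteqP; split => om // [w []]; rewrite in_nil.
have -> : BL (w :: W) = IL w `|` BL W.
  apply/seteqP; split => om /=.
    move=> [w' [+ H]]; rewrite inE => /orP [/eqP E|wW]; first by subst; left.
    by right; exists w'.
  case=> [H|[w' [wW H]]]; first by exists w; rewrite inE eqxx.
  by exists w'; rewrite inE wW orbT.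
exact: measurableU (IL_meas w) IH.
Qed.

End FibSec.
Lemma uniq_map_inj (A B : eqType) (f : A -> B) (w : seq A) x y :
  uniq (map f w) -> x \in w -> y \in w -> f x = f y -> x = y.
Proof.
elim: w => //= z w IH /andP [zn u]; rewrite !inE => /orP [/eqP ->|xw] /orP [/eqP ->|yw] //.
- by move=> E; move: zn; rewrite E map_f.
- by move=> E; move: zn; rewrite -E map_f.
- exact: IH.
Qed.

Section Main.
Context (R : realType) (VL VS : countType) (pi : VL -> VS)
  (p : VS -> R)
  (dS : measure_display) (OmegaS : measurableType dS)
  (PS : probability OmegaS R) (Y : OmegaS -> set VS)
  (Y_meas : forall v, measurable [set w | Y w v])
  (Y_prob : forall v, PS [set w | Y w v] = (p v)%:E)
  (Y_indep : indep_events PS (fun v => [set w | Y w v]))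
  (dL : measure_display) (OmegaL : measurableType dL)
  (PL : probability OmegaL R) (X : OmegaL -> set VL)
  (X_meas : forall x, measurable [set w | X w x])
  (X_indep : indep_sigma PL (fibre_sigma X pi))
  (X_prob : forall x, ((p (pi x))%:E <= PL [set w | X w x])%E).

Notation fsig := (fibre_sigma X pi).

Lemma Lclaim (V0 : seq VS) : uniq V0 -> forall W : seq (seq VL),
  (forall w, w \in W -> uniq (map pi w) /\ forall x, x \in w -> pi x \in V0) ->
  forall U A, uniq U -> (forall i, i \in U -> fsig i (A i)) ->
  (forall i, i \in U -> i \notin V0) ->
  Pr PL (Gset U A) * Pr PS (AS Y [seq map pi w | w <- W]) <= Pr PL (Gset U A `&` BL X W).
Proof.
elim: V0 => [|v V0 IH] uV0 W HW U A uU HA HU.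
  case: W HW => [|w W] HW.
    by rewrite /= AS_nil Pr0 mulr0; exact: Pr_ge0.
  have w0 : w = [::].
    case: w HW => // x w HW; have [_ /(_ x)] := HW (x :: w) (mem_head _ _).
    by rewrite inE eqxx in_nil => /(_ isT).
  subst w.
  rewrite /= AS_cons IS_nil setTU PrT mulr1.
  have -> : BL X ([::] :: W) = setT.
    by apply/seteqP; split => // om _; exists [::]; rewrite inE eqxx; split => // x; rewrite in_nil.
  by rewrite setIT.

move: uV0 => /= /andP [vV0 uV0].
have HU' : forall i, i \in U -> i \notin V0 /\ i != v.
  move=> i iU; have := HU i iU; rewrite inE negb_or => /andP [h1 h2]; split => //.
have vU : v \notin U by apply/negP => /HU'[_]; rewrite eqxx.
set Rl := undup [seq x <- flatten W | pi x == v].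
have memR : forall x, x \in Rl -> pi x = v /\ exists2 w, w \in W & x \in w.
  move=> x; rewrite mem_undup mem_filter => /andP [/eqP pv /flattenP [w wW xw]].
  by split => //; exists w.
have memR' : forall x w, w \in W -> x \in w -> pi x = v -> x \in Rl.
  move=> x w wW xw pv; rewrite mem_undup mem_filter pv eqxx /=.
  by apply/flattenP; exists w.
have uR : uniq Rl by exact: undup_uniq.
set G := Gset U A.
have mG : measurable G by exact: (G_meas X_meas HA).
set Xs := fun x => [set om | X om x].
set D0 := AS Y [seq l <- [seq map pi w | w <- W] | v \notin l].
set Dx := fun x => AS Y [seq [seq pi y | y <- w & pi y != v] | w <- W & x \in w].
have mD0 : measurable D0 by exact: AS_meas.
have mDx : forall x, measurable (Dx x) by move=> x; exact: AS_meas.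
set a := Pr PS D0.
set Tl := dz PS Dx D0 Rl.
pose Wc := fun c : seq VL => [seq [seq y <- w | pi y != v] | w <- W & all (fun x => (pi x == v) ==> (x \in c)) w].
have SI : forall c, AS Y [seq map pi w | w <- Wc c] = D0 `|` Uc Dx Rl c.
  move=> c; apply/seteqP; split => om /=.
  - move=> [l [/mapP [w' /mapP [w + ->] ->] H]].
    rewrite mem_filter => /andP [hall wW].
    have [/hasP [x xw /eqP pxv] | /hasPn hn] := boolP (has (fun x => pi x == v) w).
      right; exists x; split; first exact: memR' xw pxv.
      split; first by move/allP: hall => /(_ x xw); rewrite pxv eqxx.
      exists [seq pi y | y <- w & pi y != v]; split => //.
      by apply: map_f; rewrite mem_filter xw wW.
    left; exists (map pi w); split.
      rewrite mem_filter map_f // andbT; apply/mapP => -[y yw E].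
      by have := hn y yw; rewrite -E eqxx.
    have -> : w = [seq y <- w | pi y != v].
      by apply/esym/all_filterP/allP => y yw; exact: hn.
    exact: H.
  - case => [[l [+ H]] | [x [xR [xc [l [+ H]]]]]].
      rewrite mem_filter => /andP [vl /mapP [w wW El]]; subst l.
      have hn : forall y, y \in w -> pi y != v.
        by move=> y yw; apply/eqP => E; move: vl; rewrite -E map_f.
      exists (map pi w); split => //.
      apply/mapP; exists [seq y <- w | pi y != v].
        apply: map_f; rewrite mem_filter wW andbT; apply/allP => y yw.
        by rewrite (negbTE (hn y yw)).
      by congr map; apply/esym/all_filterP/allP => y yw; exact: hn.
    move=> /mapP [w + El]; subst l; rewrite mem_filter => /andP [xw wW].
    exists [seq pi y | y <- w & pi y != v]; split => //.
    apply/mapP; exists [seq y <- w | pi y != v] => //.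
    apply: map_f; rewrite mem_filter wW andbT; apply/allP => y yw.
    apply/implyP => /eqP pyv.
    have pxv : pi x = v by case: (memR x xR).
    have [uw _] := HW w wW.
    by rewrite (uniq_map_inj uw yw xw) // pyv pxv.
set Inv := fun s c K => exists Kc, K = G `&` Kc /\ fsig v Kc /\
  (forall om, Kc om -> forall x, x \in Rl -> x \notin s -> (X om x <-> x \in c)) /\
  uniq (s ++ c) /\ {subset s ++ c <= Rl}.
have Hstep : forall x s c K, Inv (x :: s) c K ->
    Inv s (x :: c) (K `&` Xs x) /\ Inv s c (K `&` ~` Xs x).
  move=> x s c K [Kc [-> [hKc [info [uc sc]]]]].
  have xR : x \in Rl by apply: sc; rewrite /= inE eqxx.
  have pxv : pi x = v by case: (memR x xR).
  move: (uc) => /= /andP [xsc us].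
  move: (xsc); rewrite mem_cat negb_or => /andP [xs xc].
  have pe : perm_eq (s ++ [:: x] ++ c) ([:: x] ++ s ++ c) by rewrite (perm_catCA s [:: x] c) perm_refl.
  have u1 : uniq (s ++ x :: c) by rewrite (perm_uniq pe).
  have sub1 : {subset s ++ c <= Rl}.
    by move=> y yin; apply: sc; rewrite /= inE yin orbT.
  split.
  - exists (Kc `&` Xs x); split; first by rewrite setIA.
    split; first by apply: fs_I => //; exact: fs_X.
    split.
      move=> om [Kom Xom] y yR ys; have [/eqP E|yx] := boolP (y == x).
        by subst y; split => // _; rewrite inE eqxx.
      have := info om Kom y yR; rewrite inE negb_or yx ys => /(_ isT).
      by rewrite inE (negbTE yx).
    split; first exact: u1.
    move=> y; rewrite mem_cat inE => /orP [ys|/orP [/eqP ->|yc]] //.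
      by apply: sub1; rewrite mem_cat ys.
    by apply: sub1; rewrite mem_cat yc orbT.
  - exists (Kc `&` ~` Xs x); split; first by rewrite setIA.
    split; first by apply: fs_I => //; apply: fs_C; exact: fs_X.
    split.
      move=> om [Kom Xom] y yR ys; have [/eqP E|yx] := boolP (y == x).
        by subst y; split => // H; rewrite H in xc.
      have := info om Kom y yR; rewrite inE negb_or yx ys => /(_ isT).
      by [].
    by split.

have Hleaf : forall c K, Inv [::] c K ->
    Pr PL K * (a + lsum Tl c) <= Pr PL (K `&` BL X W).
  move=> c K [Kc [-> [hKc [info [uc sc]]]]].
  have info' : forall om, Kc om -> forall x, x \in Rl -> (X om x <-> x \in c).
    by move=> om Kom x xR; exact: info.
  have eqB : (G `&` Kc) `&` BL X W = (G `&` Kc) `&` BL X (Wc c).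
    apply/seteqP; split => om [[Gom Kom] Bom]; split => //.
      move: Bom => [w [wW Hw]]; exists [seq y <- w | pi y != v]; split.
        apply: map_f; rewrite mem_filter wW andbT; apply/allP => x xw.
        apply/implyP => /eqP pxv; have xR := memR' x w wW xw pxv.
        by apply/(info' om Kom x xR); exact: Hw.
      by move=> x; rewrite mem_filter => /andP [_ /Hw].
    move: Bom => [w' [/mapP [w + ->] Hw]]; rewrite mem_filter => /andP [hall wW].
    exists w; split => // x xw.
    have [/eqP pxv|pxv] := boolP (pi x == v).
      have xR := memR' x w wW xw pxv.
      apply/(info' om Kom x xR).
      by move/allP: hall => /(_ x xw); rewrite pxv eqxx.
    by apply: Hw; rewrite mem_filter pxv xw.
  have HWc : forall w, w \in Wc c -> uniq (map pi w) /\ forall x, x \in w -> pi x \in V0.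
    move=> _ /mapP [w + ->]; rewrite mem_filter => /andP [_ wW].
    have [uw Hx] := HW w wW; split.
      by apply: subseq_uniq uw; apply: map_subseq; exact: filter_subseq.
    move=> x; rewrite mem_filter => /andP [pxv xw].
    by move: (Hx x xw); rewrite inE (negbTE pxv).
  have uU2 : uniq (v :: U) by rewrite /= vU uU.
  have HA2 : forall i, i \in v :: U -> fsig i (upd A v Kc i).
    move=> i; rewrite inE /upd; case: eqP => [-> //|_] /= iU; exact: HA.
  have HU2 : forall i, i \in v :: U -> i \notin V0.
    move=> i; rewrite inE => /orP [/eqP -> //|iU]; exact: (HU' i iU).1.
  have IHc := IH uV0 (Wc c) HWc (v :: U) (upd A v Kc) uU2 HA2 HU2.
  rewrite Gset_cons Gset_upd // /upd eqxx -/G [Kc `&` G]setIC in IHc.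
  rewrite eqB; apply: le_trans IHc.
  apply: ler_wpM2l; first exact: Pr_ge0.
  rewrite SI.
  exact: LB.

have I0 : Inv Rl [::] G.
  exists setT; split; first by rewrite setIT.
  split; first exact: fs_T.
  split; first by move=> om _ x ->.
  by rewrite cats0; split => // x; rewrite cats0.
have mono := LS_mono Hstep Hleaf I0.
rewrite LS_part in mono; [|move=> x; exact: X_meas|exact: mG|exact: BL_meas].
rewrite LS_lin in mono; [|move=> x; exact: X_meas|exact: mG|by rewrite cats0].
apply: le_trans mono.
have sumge : \sum_(yd <- Tl) yd.2 * (Pr PL G * p v) <=
    \sum_(yd <- Tl) yd.2 * Pr PL (G `&` Eset Xs Rl [::] yd.1).
  rewrite big_seq_cond [X in _ <= X]big_seq_cond; apply: ler_sum => yd /andP [ydT _].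
  have [y1R y2] := dz_prop mDx mD0 ydT.
  apply: ler_wpM2l => //.
  have pyv : pi yd.1 = v by case: (memR _ y1R).
  rewrite /Eset in_nil y1R /Xs (G_indep X_meas X_indep uU HA vU); last exact: fs_X.
  apply: ler_wpM2l; first exact: Pr_ge0.
  have := X_prob yd.1; rewrite pyv (PrE PL (X_meas yd.1)) lee_fin; exact.
rewrite -big_distrl /= dz_sum in sumge.
have SI2 : AS Y [seq [seq x <- l | predC1 v x] | l <- [seq map pi w | w <- W]] = D0 `|` Uc Dx Rl Rl.
  rewrite -SI; congr AS.
  rewrite /Wc (@eq_in_filter _ _ predT); last first.
    move=> w wW; apply/allP => x xw; apply/implyP => /eqP pxv; exact: memR' x w wW xw pxv.
  rewrite filter_predT -!map_comp; apply: eq_map => w /=.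
  by rewrite filter_map.
rewrite (Srec Y_meas Y_prob Y_indep v) SI2 -/D0 -/a.
apply: le_trans (lerD (lexx _) sumge).
rewrite mulrDr; apply: lerD => //.
by rewrite [X in _ <= X]mulrC -mulrA.
Qed.

Lemma CF (W : seq (seq VL)) : (forall w, w \in W -> uniq (map pi w)) ->
  Pr PS (AS Y [seq map pi w | w <- W]) <= Pr PL (BL X W).
Proof.
move=> HW.
have := @Lclaim (undup (map pi (flatten W))) (undup_uniq _) W _ [::] (fun _ => setT) isT.
rewrite Gset_nil PrT mul1r setTI; apply => //.
move=> w wW; split; first exact: HW.
by move=> x xw; rewrite mem_undup; apply: map_f; apply/flattenP; exists w.
Qed.

Definition ASp (Wp : seq VL -> Prop) : set OmegaS :=
  [set om | exists w, Wp w /\ forall x, x \in w -> Y om (pi x)].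
Definition BLp (Wp : seq VL -> Prop) : set OmegaL :=
  [set om | exists w, Wp w /\ forall x, x \in w -> X om x].

Definition Wn (Wp : seq VL -> Prop) (n : nat) : seq (seq VL) :=
  [seq w <- [seq odflt [::] (unpickle k) | k <- iota 0 n] | `[< Wp w >]].

Lemma Wn_mem Wp n w : w \in Wn Wp n -> Wp w.
Proof. by rewrite mem_filter => /andP [/asboolP]. Qed.

Lemma Wn_in Wp w : Wp w -> forall n, (pickle w < n)%N -> w \in Wn Wp n.
Proof.
move=> Hw n lt; rewrite mem_filter; apply/andP; split; first exact/asboolP.
by apply/mapP; exists (pickle w); [rewrite mem_iota | rewrite pickleK].
Qed.

Lemma ASp_union Wp : ASp Wp = \bigcup_n AS Y [seq map pi w | w <- Wn Wp n].
Proof.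
apply/seteqP; split => om /=.
  move=> [w [Hw H]]; exists (pickle w).+1 => //=.
  exists (map pi w); split; first by apply: map_f; apply: Wn_in.
  by move=> u /mapP [x xw ->]; exact: H.
move=> [n _ [l [/mapP [w wn ->] H]]]; exists w; split; first exact: Wn_mem wn.
by move=> x xw; apply: H; exact: map_f.
Qed.

Lemma BLp_union Wp : BLp Wp = \bigcup_n BL X (Wn Wp n).
Proof.
apply/seteqP; split => om /=.
  move=> [w [Hw H]]; exists (pickle w).+1 => //=.
  by exists w; split => //; apply: Wn_in.
move=> [n _ [w [wn H]]]; exists w; split => //; exact: Wn_mem wn.
Qed.

Lemma ASp_meas Wp : measurable (ASp Wp).
Proof. rewrite ASp_union; apply: bigcupT_measurable => n; exact: AS_meas. Qed.

Lemma BLp_meas Wp : measurable (BLp Wp).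
Proof. rewrite BLp_union; apply: bigcupT_measurable => n; exact: BL_meas. Qed.

Lemma CC (Wp : seq VL -> Prop) : (forall w, Wp w -> uniq (map pi w)) ->
  (PS (ASp Wp) <= PL (BLp Wp))%E.
Proof.
move=> HW.
have nd : nondecreasing_seq (fun n => AS Y [seq map pi w | w <- Wn Wp n]).
  move=> m n mn; apply/subsetPset => om [l [/mapP [w wn ->] H]].
  exists (map pi w); split => //; apply: map_f.
  move: wn; rewrite !mem_filter => /andP [-> /mapP [k]].
  rewrite mem_iota => /andP [_ kn] ->; apply/mapP; exists k => //.
  by rewrite mem_iota /= (leq_trans kn mn).
have mU : measurable (\bigcup_n AS Y [seq map pi w | w <- Wn Wp n]).
  by rewrite -ASp_union; exact: ASp_meas.
have cv := nondecreasing_cvg_mu (mu := PS) (fun n => AS_meas Y_meas _) mU nd.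
rewrite -ASp_union in cv.
apply: (cvge_to_le cv); apply: nearW => n /=.
rewrite (PrE PS (AS_meas Y_meas _)).
apply: (@le_trans _ _ (PL (BL X (Wn Wp n)))).
  rewrite (PrE PL (BL_meas X_meas _)) lee_fin; apply: CF => w wn; apply: HW; exact: Wn_mem wn.
apply: le_measure; rewrite ?inE; [exact: BL_meas|exact: BLp_meas|].
by rewrite BLp_union => om Bom; exists n.
Qed.
End Main.
Lemma PH (A : eqType) (L : seq A) (P : A -> nat -> Prop) :
  (forall y n m, (m <= n)%N -> P y n -> P y m) ->
  (forall n, exists y, y \in L /\ P y n) -> exists y, y \in L /\ forall n, P y n.
Proof.
move=> anti H.
suff [//|[N HN]] : (exists y, y \in L /\ forall n, P y n) \/
    exists N, forall y, y \in L -> ~ P y N.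
  by have [y [yL Py]] := H N; have := HN y yL.
elim: L {H} => [|y L [[z [zL Pz]]|[N HN]]].
- by right; exists 0%N => y; rewrite in_nil.
- by left; exists z; rewrite inE zL orbT.
- have [Py|] := pselect (forall n, P y n).
    by left; exists y; rewrite inE eqxx.
  move=> /existsNP [n nPy]; right; exists (maxn N n) => z; rewrite inE => /orP [/eqP ->|zL] Pz.
    by apply: nPy; apply: anti Pz; exact: leq_maxr.
  by apply: (HN z zL); apply: anti Pz; exact: leq_maxl.
Qed.

Section Konig.
Context (V : countType) (adj : V -> V -> Prop).

Fixpoint chainP (s : seq V) : Prop :=
  match s with
  | x :: t => match t with y :: _ => adj x y /\ chainP t | [::] => True end
  | [::] => True
  end.

Lemma chainP_cat s t : chainP (s ++ t) -> chainP s.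
Proof.
elim: s => [|x [|y s] IH] //= [h1 h2]; split => //; exact: IH.
Qed.

Lemma chainP_nth s i x0 : chainP s -> (i.+1 < size s)%N -> adj (nth x0 s i) (nth x0 s i.+1).
Proof.
elim: s i => [|x [|y s] IH] [|i] //= [h1 h2] lt //.
exact: IH.
Qed.

Lemma chainP_last s y t x0 : s != [::] -> chainP (s ++ y :: t) -> adj (last x0 s) y.
Proof.
elim: s x0 => [|x [|z s] IH] x0 //= _ [h1 h2] //.
exact: (IH z).
Qed.

Definition fpZ (Z : V -> Prop) s := (uniq s /\ chainP s) /\ forall x, x \in s -> Z x.

Lemma fp_prefix Z s t : fpZ Z (s ++ t) -> fpZ Z s.
Proof.
move=> [[u c] h]; split; first split.
- by move: u; rewrite cat_uniq => /andP [].
- exact: chainP_cat c.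
- by move=> x xs; apply: h; rewrite mem_cat xs.
Qed.

Definition ext Z s := forall n, exists t, fpZ Z (s ++ t) /\ size t = n.

Lemma ext_anti Z s n m : (m <= n)%N -> (exists t, fpZ Z (s ++ t) /\ size t = n) ->
  exists t, fpZ Z (s ++ t) /\ size t = m.
Proof.
move=> mn [t [ft st]]; exists (take m t); split.
  by apply: (@fp_prefix _ _ (drop m t)); rewrite -catA cat_take_drop.
by rewrite size_take st; case: ltngtP mn => // ->.
Qed.

Context (lf : locally_finite adj).

Lemma ext_step Z s (x0 : V) : s != [::] -> ext Z s -> exists y, ext Z (rcons s y).
Proof.
move=> sn es.
have [L HL] := iffLR (finite_seqP _) (lf (last x0 s)).
have := @PH _ L (fun y n => exists t, fpZ Z (rcons s y ++ t) /\ size t = n).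
case.
- by move=> y n m mn; apply: ext_anti.
- move=> n; have [[|y t] [ft st]] := es n.+1 => //.
  exists y; split.
    have cS : chainP (s ++ y :: t) by case: ft => [[_ ?] _].
    have : [set y | adj (last x0 s) y] y by exact: (@chainP_last s y t x0 sn cS).
    by rewrite HL.
  by exists t; split; [rewrite cat_rcons | case: st].
by move=> y [_ Hy]; exists y.
Qed.

Fixpoint iterS (f : seq V -> V) (r : V) (k : nat) : seq V :=
  match k with 0 => [:: r] | k'.+1 => rcons (iterS f r k') (f (iterS f r k')) end.

Lemma Konig Z (roots : seq V) :
  (forall n, exists r t, r \in roots /\ fpZ Z (r :: t) /\ size t = n) ->
  exists g, inf_sa_path adj g /\ forall m, Z (g m).
Proof.
move=> H.
have [r [_ er]] : exists r, r \in roots /\ ext Z [:: r].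
  apply: (@PH _ roots (fun r n => exists t, fpZ Z ([:: r] ++ t) /\ size t = n)).
    by move=> y n m; apply: ext_anti.
  by move=> n; have [r [t [rR [ft st]]]] := H n; exists r; split => //; exists t.
have [f Hf] : {f : seq V -> V & forall s, s != [::] -> ext Z s -> ext Z (rcons s (f s))}.
  apply: (@choice _ _ (fun s y => s != [::] -> ext Z s -> ext Z (rcons s y))) => s.
  have [[sn es]|] := pselect (s != [::] /\ ext Z s).
    by have [y ey] := ext_step r sn es; exists y.
  by move=> nh; exists r => sn es; exfalso; apply: nh.
pose S := iterS f r.
have sizeS : forall k, size (S k) = k.+1.
  by elim => [|k IH] //=; rewrite size_rcons IH.
have extS : forall k, ext Z (S k).
  elim => [|k IH] //=; apply: Hf => //.
  by rewrite -size_eq0 sizeS.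
have fpS : forall k, fpZ Z (S k).
  by move=> k; have [t [ft /size0nil st]] := extS k 0%N; rewrite st cats0 in ft.
have pref : forall k m, (m <= k)%N -> nth r (S k) m = nth r (S m) m.
  elim => [|k IH] m; first by rewrite leqn0 => /eqP ->.
  rewrite leq_eqVlt => /orP [/eqP -> //|mk].
  by rewrite /= nth_rcons sizeS mk IH.
exists (fun m => nth r (S m) m); split; last first.
  by move=> m; case: (fpS m) => _; apply; rewrite mem_nth // sizeS.
split.
  move=> i j /= E.
  have [[uS _] _] := fpS (maxn i j).
  rewrite -(pref (maxn i j) i (leq_maxl _ _)) -(pref (maxn i j) j (leq_maxr _ _)) in E.
  by apply/eqP; rewrite -(nth_uniq r _ _ uS) ?sizeS ?ltnS ?leq_maxl ?leq_maxr // E.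
move=> m /=.
have [[_ cS] _] := fpS m.+1.
rewrite -(pref m.+1 m (leqnSn m)).
by apply: chainP_nth cS _; rewrite sizeS.
Qed.

Lemma path_prefix Z g : inf_sa_path adj g -> (forall m, Z (g m)) ->
  forall n, fpZ Z (g 0%N :: [seq g i | i <- iota 1 n]).
Proof.
move=> [ig ag] Zg n.
have -> : g 0%N :: [seq g i | i <- iota 1 n] = [seq g i | i <- iota 0 n.+1] by [].
split; first split.
- by rewrite map_inj_uniq ?iota_uniq.
- move: 0%N; elim: n => [|n IH] k //=; split; first exact: ag.
  exact: IH.
- by move=> x /mapP [i _ ->].
Qed.

End Konig.
Lemma cnt_meas (I : countType) d (T : measurableType d) (F : I -> set T) :
  (forall i, measurable (F i)) -> measurable [set w | exists i, F i w].
Proof.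
move=> mF.
have -> : [set w | exists i, F i w] =
    \bigcup_k (match (unpickle k : option I) with Some i => F i | None => set0 end).
  apply/seteqP; split => w /=.
    by move=> [i Fi]; exists (pickle i) => //; rewrite pickleK.
  by move=> [k _]; case: (unpickle k) => // i Fi; exists i.
by apply: bigcupT_measurable => k; case: (unpickle k).
Qed.

Lemma IZ_meas (V : countType) d (T : measurableType d) (Zs : T -> set V)
  (Zm : forall x, measurable [set w | Zs w x]) (s : seq V) :
  measurable [set w | forall x, x \in s -> Zs w x].
Proof.
elim: s => [|x s IH].
  by have -> : [set w | forall x, x \in [::] -> Zs w x] = setT by apply/seteqP; split => w // _ y; rewrite in_nil.
have -> : [set w | forall y, y \in x :: s -> Zs w y] = [set w | Zs w x] `&` [set w | forall y, y \in s -> Zs w y].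
  apply/seteqP; split => w /=.
    by move=> H; split; [apply: H; rewrite inE eqxx| move=> y ys; apply: H; rewrite inE ys orbT].
  by move=> [H1 H2] y; rewrite inE => /orP [/eqP -> //|/H2].
exact: measurableI.
Qed.

Lemma M_meas (V : countType) (adj : V -> V -> Prop) (lf : locally_finite adj)
  d (T : measurableType d) (Zs : T -> set V)
  (Zm : forall x, measurable [set w | Zs w x]) :
  measurable [set w | has_inf_retained_path adj (Zs w)].
Proof.
have -> : [set w | has_inf_retained_path adj (Zs w)] =
  [set w | exists x0, forall n, exists t, fpZ adj (Zs w) (x0 :: t) /\ size t = n].
  apply/seteqP; split => w /=.
    move=> [g [pg Zg]]; exists (g 0%N) => n; exists [seq g i | i <- iota 1 n]; split.
      exact: path_prefix.
    by rewrite size_map size_iota.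
  move=> [x0 H]; apply: (@Konig _ adj lf (Zs w) [:: x0]) => n.
  by have [t [ft st]] := H n; exists x0, t; rewrite inE eqxx.
apply: cnt_meas => x0.
have -> : (fun w => forall n, exists t, fpZ adj (Zs w) (x0 :: t) /\ size t = n) =
    \bigcap_n [set w | exists t, fpZ adj (Zs w) (x0 :: t) /\ size t = n].
  apply/seteqP; split => w /=; first by move=> H n _; exact: H.
  by move=> H n; apply: H.
apply: bigcapT_measurable => n.
apply: cnt_meas => t.
have [P|nP] := pselect ((uniq (x0 :: t) /\ chainP adj (x0 :: t)) /\ size t = n).
  have -> : (fun w => fpZ adj (Zs w) (x0 :: t) /\ size t = n) =
      [set w | forall x, x \in x0 :: t -> Zs w x].
    apply/seteqP; split => w /=; first by move=> [[_ ?] _].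
    by move=> H; case: P => P1 P2; split.
  exact: IZ_meas.
have -> : (fun w => fpZ adj (Zs w) (x0 :: t) /\ size t = n) = set0.
  apply/seteqP; split => w //= [[P1 _] P2]; exact: nP.
exact: measurable0.
Qed.

Lemma chain_iota (V : countType) (adj : V -> V -> Prop) (f : nat -> V) a n :
  (forall m, (a <= m)%N -> adj (f m) (f m.+1)) -> chainP adj [seq f m | m <- iota a n].
Proof.
elim: n a => [|[|n] IH] a H //=.
split; first exact: H.
by apply: (IH a.+1) => m am; apply: H; exact: ltnW.
Qed.
Unset Implicit Arguments. Set Strict Implicit. Set Printing Implicit Defensive.
Theorem theorem4p2 (R : realType) (VL VS : countType)
  (adjL : VL -> VL -> Prop) (adjS : VS -> VS -> Prop)
  (hL : simple_graph adjL) (hS : simple_graph adjS)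
  (lfL : locally_finite adjL) (lfS : locally_finite adjS)
  (pi : VL -> VS) (pi_surj : forall v, exists x, pi x = v)
  (Phi : (nat -> VS) -> nat * (nat -> VL))
  (Phi_meas : lift_measurable adjS Phi)
  (Phi_lift : forall gamma, inf_sa_path adjS gamma ->
     inf_sa_path_from adjL (Phi gamma).1 (Phi gamma).2 /\
     forall m, ((Phi gamma).1 <= m)%N -> pi ((Phi gamma).2 m) = gamma m)
  (p : VS -> R) (p01 : forall v, 0 <= p v <= 1)
  (dS : measure_display) (OmegaS : measurableType dS)
  (PS : probability OmegaS R) (Y : OmegaS -> set VS)
  (Y_meas : forall v, measurable [set w | Y w v])
  (Y_prob : forall v, PS [set w | Y w v] = (p v)%:E)
  (Y_indep : indep_events PS (fun v => [set w | Y w v]))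
  (dL : measure_display) (OmegaL : measurableType dL)
  (PL : probability OmegaL R) (X : OmegaL -> set VL)
  (X_meas : forall x, measurable [set w | X w x])
  (X_indep : indep_sigma PL (fibre_sigma X pi))
  (X_prob : forall x, ((p (pi x))%:E <= PL [set w | X w x])%E) :
  (PS [set w | has_inf_retained_path adjS (Y w)] <=
   PL [set w | has_inf_retained_path adjL (X w)])%E.
Proof.
set ES := [set w | has_inf_retained_path adjS (Y w)].
set EL := [set w | has_inf_retained_path adjL (X w)].
have mES : measurable ES by exact: M_meas.
have mEL : measurable EL by exact: M_meas.
pose k (g : nat -> VS) := (Phi g).1.
pose lift (g : nat -> VS) := (Phi g).2.
pose Wp N n (w : seq VL) := exists g, inf_sa_path adjS g /\
  (pickle (k g, lift g (k g)) < N)%N /\ w = [seq lift g m | m <- iota (k g) n.+1].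
have Wpi : forall g, inf_sa_path adjS g -> forall n,
    [seq pi x | x <- [seq lift g m | m <- iota (k g) n]] = [seq g m | m <- iota (k g) n].
  move=> g pg n; rewrite -map_comp; apply/eq_in_map => m; rewrite mem_iota => /andP [km _].
  by rewrite /= (Phi_lift g pg).2.
have Wuniq : forall N n w, Wp N n w -> uniq (map pi w).
  move=> N n _ [g [pg [_ ->]]]; rewrite Wpi //.
  by rewrite map_inj_uniq ?iota_uniq //; case: pg.
pose A N n := ASp pi Y (Wp N n).
pose B N n := BLp X (Wp N n).
have hAB : forall N n, (PS (A N n) <= PL (B N n))%E.
  by move=> N n; apply: (CC Y_meas Y_prob Y_indep X_meas X_indep X_prob); exact: Wuniq.
pose DN N := \bigcap_n A N n.
have mA : forall N n, measurable (A N n) by move=> N n; exact: ASp_meas.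
have mB : forall N n, measurable (B N n) by move=> N n; exact: BLp_meas.
have mDN : forall N, measurable (DN N) by move=> N; exact: bigcapT_measurable.
have ES_sub : ES `<=` \bigcup_N DN N.
  move=> om [g [pg Yg]]; exists (pickle (k g, lift g (k g))).+1 => // n _.
  exists [seq lift g m | m <- iota (k g) n.+1]; split; first by exists g.
  move=> x /mapP [m]; rewrite mem_iota => /andP [km _] ->.
  by rewrite (Phi_lift g pg).2.
have ndDN : nondecreasing_seq DN.
  move=> N N' NN'; apply/subsetPset => om H n _.
  have [w [[g [pg [lt ->]]] Hw]] := H n I.
  exists [seq lift g m | m <- iota (k g) n.+1]; split => //.
  by exists g; split => //; split => //; exact: leq_trans lt NN'.
have mU : measurable (\bigcup_N DN N) by exact: bigcupT_measurable.
have cv := nondecreasing_cvg_mu (mu := PS) mDN mU ndDN.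
apply: (@le_trans _ _ (PS (\bigcup_N DN N))).
  by apply: le_measure; rewrite ?inE.
apply: (cvge_to_le cv); apply: nearW => N /=.
have niB : nonincreasing_seq (B N).
  move=> n n' nn'; apply/subsetPset => om [w [[g [pg [lt ->]]] Hw]].
  exists [seq lift g m | m <- iota (k g) n.+1]; split; first by exists g.
  move=> x /mapP [m]; rewrite mem_iota => /andP [km mlt] ->; apply: Hw.
  apply: map_f; rewrite mem_iota km /=; apply: leq_trans mlt _.
  by rewrite leq_add2l.
have mIB : measurable (\bigcap_n B N n) by exact: bigcapT_measurable.
have fin0 : (PL (B N 0%N) < +oo)%E.
  by rewrite (PrE PL (mB N 0%N)) ltey.
have cvB := nonincreasing_cvg_mu fin0 (mB N) mIB niB.
have IB_sub : \bigcap_n B N n `<=` EL.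
  move=> om HB.
  pose roots := pmap (fun j => omap snd (unpickle j : option (nat * VL))) (iota 0 N).
  apply: (@Konig _ adjL lfL (X om) roots) => n.
  have [w [[g [pg [lt Ew]]] Hw]] := HB n I.
  exists (lift g (k g)), [seq lift g m | m <- iota (k g).+1 n]; split.
    rewrite mem_pmap; apply/mapP; exists (pickle (k g, lift g (k g))).
      by rewrite mem_iota.
    by rewrite pickleK.
  have Ew' : w = lift g (k g) :: [seq lift g m | m <- iota (k g).+1 n] by rewrite Ew.
  split; last by rewrite size_map size_iota.
  rewrite -Ew'; split; first split.
  - by apply: map_uniq (Wuniq N n w _); exists g.
  - rewrite Ew; apply: chain_iota => m km.
    exact: ((Phi_lift g pg).1.2 m km).
  - exact: Hw.
apply: (@le_trans _ _ (PL (\bigcap_n B N n))); last first.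
  by apply: le_measure; rewrite ?inE.
apply: (cvge_to_ge cvB); apply: nearW => n /=.
apply: le_trans (hAB N n).
by apply: le_measure; rewrite ?inE // => om H; exact: H n I.
Qed.
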